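(* Let $R$ be any ring. Every left $R$-module which is the kernel of a homomorphism between projective left $R$-modules is isomorphic to the inverse limit of an inverse system indexed by $\omega_1$ (the first uncountable ordinal) of projective left $R$-modules and surjective homomorphisms.
   Context: Rings are associative with unit, modules are unital. *)

(* Defs.v *)
From HB Require Import structures.
From mathcomp Require Import all_boot all_order all_algebra.
Set Implicit Arguments. Unset Strict Implicit. Unset Printing Implicit Defensive.
Import Order.TTheory GRing.Theory.
Local Open Scope ring_scope.

Definition surj (A B : Type) (g : A -> B) : Prop := forall y, exists x, g x = y.

Definition projective (R : pzRingType) (P : lmodType R) : Prop :=
  forall (A B : lmodType R) (g : {linear A -> B}) (h : {linear P -> B}),
    surj g -> exists k : {linear P -> A}, forall x, g (k x) = h x.

Definition is_kernel (R : pzRingType) (M P Q : lmodType R)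
  (f : {linear P -> Q}) (i : {linear M -> P}) : Prop :=
  injective i /\ (forall x, f x = 0 <-> exists m, i m = x).

Definition countable_pred (I : Type) (S : I -> Prop) : Prop :=
  exists c : I -> nat, forall x y, S x -> S y -> c x = c y -> x = y.

(* The totally ordered type I is order-isomorphic to omega_1: it is
   well-ordered, uncountable, and every proper initial segment is countable.
   (These properties characterize omega_1 up to order isomorphism.) *)
Definition omega1_like (d : Order.disp_t) (I : orderType d) : Prop :=
  [/\ (forall S : I -> Prop, (exists x, S x) ->
         exists2 x, S x & forall y, S y -> (x <= y)%O),
      ~ countable_pred (fun _ : I => True)
    & forall a : I, countable_pred (fun x => (x < a)%O)].

(* Inverse system over I: modules X a, bonding maps pi a b : X b -> X a
   (only meaningful for a <= b). *)
Definition inverse_system (R : pzRingType) (d : Order.disp_t) (I : orderType d)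
  (X : I -> lmodType R) (pi : forall a b : I, {linear X b -> X a}) : Prop :=
  (forall a x, pi a a x = x) /\
  (forall a b c, (a <= b)%O -> (b <= c)%O -> forall x, pi a b (pi b c x) = pi a c x).

(* M together with the cone phi is (isomorphic to) the inverse limit of the
   system: the induced linear map M -> {compatible families} is bijective. *)
Definition is_inverse_limit (R : pzRingType) (d : Order.disp_t) (I : orderType d)
  (X : I -> lmodType R) (pi : forall a b : I, {linear X b -> X a})
  (M : lmodType R) (phi : forall a, {linear M -> X a}) : Prop :=
  [/\ (forall a b, (a <= b)%O -> forall m, pi a b (phi b m) = phi a m),
      (forall m m', (forall a, phi a m = phi a m') -> m = m')
    & (forall x : forall a, X a,
         (forall a b, (a <= b)%O -> pi a b (x b) = x a) ->
         exists m, forall a, phi a m = x a)].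

(* Main.v *)
Require Import Defs.
From HB Require Import structures.
From mathcomp Require Import all_boot all_order all_algebra.
From mathcomp Require Import finmap.
From mathcomp Require Import boolp.
From mathcomp.multinomials Require Import monalg.
Set Implicit Arguments. Unset Strict Implicit. Unset Printing Implicit Defensive.
Import Order.TTheory GRing.Theory.
Local Open Scope ring_scope.


Definition mkLin (R : pzRingType) (U V : lmodType R) (f : U -> V) (H : linear f)
  : {linear U -> V} := HB.pack f (GRing.isLinear.Build R U V *:%R f H).

Section FM.
Variables (R : pzRingType) (Q : lmodType R) (K : choiceType).
Definition FM := {malg Q[K]}.
HB.instance Definition _ := GRing.Zmodule.on FM.

Definition fmscale (a : R) (x : FM) : FM := \sum_(k <- msupp x) << a *: x@_k *g k >>.

Lemma fmscaleE a x k : (fmscale a x)@_k = a *: x@_k.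
Proof.
rewrite /fmscale raddf_sum /= [in RHS](monalgE x) raddf_sum scaler_sumr /=.
by apply/eq_bigr=> /= i _; rewrite !mcoeffU scalerMnr.
Qed.

Lemma fmscaleA a b (x : FM) : fmscale a (fmscale b x) = fmscale (a * b) x.
Proof. by apply/malgP=> k; rewrite !fmscaleE scalerA. Qed.
Lemma fmscale1 (x : FM) : fmscale 1 x = x.
Proof. by apply/malgP=> k; rewrite !fmscaleE scale1r. Qed.
Lemma fmscaleDr a (x y : FM) : fmscale a (x + y) = fmscale a x + fmscale a y.
Proof. by apply/malgP=> k; rewrite !(mcoeffD, fmscaleE) scalerDr. Qed.
Lemma fmscaleDl (x : FM) a b : fmscale (a + b) x = fmscale a x + fmscale b x.
Proof. by apply/malgP=> k; rewrite !(mcoeffD, fmscaleE) scalerDl. Qed.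

HB.instance Definition _ := GRing.Zmodule_isLmodule.Build R FM
  fmscaleA fmscale1 fmscaleDr fmscaleDl.

Lemma fmZE a (x : FM) k : (a *: x)@_k = a *: x@_k.
Proof. exact: fmscaleE. Qed.

Definition fmU k q : FM := << q *g k >>.

Lemma fm_decomp (V : zmodType) (F : {additive FM -> V}) (x : FM) :
  F x = \sum_(k <- msupp x) F (fmU k x@_k).
Proof. by rewrite {1}[x]monalgE raddf_sum. Qed.

Lemma fm_decompw (V : zmodType) (F : {additive FM -> V}) (x : FM) (D : {fset K}) :
  (msupp x `<=` D)%fset -> F x = \sum_(k <- D) F (fmU k x@_k).
Proof. by move=> sD; rewrite {1}(monalgEw sD) raddf_sum. Qed.

End FM.

Section Ext.
Variables (R : pzRingType) (Q : lmodType R) (K : choiceType) (V : lmodType R).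
Variable F : K -> {linear Q -> V}.

Definition fmext (x : FM Q K) : V := \sum_(k <- msupp x) F k x@_k.

Lemma fmext_w (x : FM Q K) (D : {fset K}) : (msupp x `<=` D)%fset ->
  fmext x = \sum_(k <- D) F k x@_k.
Proof.
move=> sD; rewrite /fmext (big_fset_incl _ sD) // => k _ kn.
by rewrite mcoeff_outdom // linear0.
Qed.

Lemma fmext_lin : linear fmext.
Proof.
move=> a x y.
pose D := (msupp x `|` msupp y `|` msupp (a *: x + y))%fset.
have s1 : (msupp x `<=` D)%fset by rewrite /D -fsetUA fsubsetUl.
have s2 : (msupp y `<=` D)%fset by rewrite /D fsetUC fsetUA fsubsetUr.
have s3 : (msupp (a *: x + y) `<=` D)%fset by rewrite /D fsubsetUr.
rewrite (fmext_w s1) (fmext_w s2) (fmext_w s3) scaler_sumr -big_split /=.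
by apply: eq_bigr => k _; rewrite mcoeffD fmZE linearP.
Qed.

Definition fmextL := mkLin fmext_lin.

Lemma fmextU k q : fmext (fmU k q) = F k q.
Proof.
rewrite /fmext /fmU msuppU; case: eqP => [->|_]; first by rewrite big_nil linear0.
by rewrite big_seq_fset1 mcoeffUU.
Qed.

End Ext.

Lemma fm_linext (R : pzRingType) (Q : lmodType R) (K : choiceType) (V : lmodType R)
  (G1 G2 : {linear FM Q K -> V}) :
  (forall k q, G1 (fmU k q) = G2 (fmU k q)) -> forall x, G1 x = G2 x.
Proof.
by move=> H x; rewrite (fm_decomp G1) (fm_decomp G2); apply: eq_bigr => k _; apply: H.
Qed.

Section FMU.
Variables (R : pzRingType) (Q : lmodType R) (K : choiceType).
Lemma fmU_lin k : linear (@fmU R Q K k).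
Proof.
move=> a x y; apply/malgP => j.
by rewrite mcoeffD fmZE /fmU !mcoeffU mulrnDl scalerMnr.
Qed.
Definition fmUL k := mkLin (fmU_lin k).
End FMU.

Section Push.
Variables (R : pzRingType) (Q : lmodType R).

Definition push (K1 K2 : choiceType) (h : K1 -> K2) : {linear FM Q K1 -> FM Q K2} :=
  fmextL (fun k => fmUL Q (h k)).

Lemma pushU (K1 K2 : choiceType) (h : K1 -> K2) k q : push h (fmU k q) = fmU (h k) q.
Proof. exact: fmextU. Qed.

Lemma pushE (K1 K2 : choiceType) (h : K1 -> K2) x :
  push h x = \sum_(k <- msupp x) fmU (h k) x@_k.
Proof. by []. Qed.

Lemma push_id (K : choiceType) (h : K -> K) x : (forall k, h k = k) -> push h x = x.
Proof.
move=> hk; rewrite pushE [RHS]monalgE; apply: eq_bigr => k _; by rewrite hk.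
Qed.

Lemma push_comp (K1 K2 K3 : choiceType) (h1 : K2 -> K3) (h2 : K1 -> K2) x :
  push h1 (push h2 x) = push (h1 \o h2) x.
Proof.
rewrite [push h2 x]pushE linear_sum /= [RHS]pushE; apply: eq_bigr => k _.
by rewrite fmextU.
Qed.

Lemma push_coef (K1 K2 : choiceType) (h : K1 -> K2) x t :
  (push h x)@_t = \sum_(k <- msupp x | h k == t) x@_k.
Proof.
rewrite pushE raddf_sum [RHS]big_mkcond /=; apply: eq_bigr => k _.
by rewrite /fmU mcoeffU; case: (h k == t).
Qed.

Lemma idlin : linear (@idfun Q). Proof. by []. Qed.
Definition aug (K : choiceType) : {linear FM Q K -> Q} := fmextL (fun _ : K => mkLin idlin).

Lemma augU (K : choiceType) k q : aug K (fmU k q) = q.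
Proof. exact: fmextU. Qed.

Lemma aug_push (K1 K2 : choiceType) (h : K1 -> K2) x : aug K2 (push h x) = aug K1 x.
Proof.
rewrite [push h x]pushE linear_sum /= [RHS](fm_decomp (aug K1)).
apply: eq_bigr => k _; rewrite fmextU; exact: (esym (fmextU _ _ _)).
Qed.

Lemma push_surj (K1 K2 : choiceType) (h : K1 -> K2) : surj h -> surj (push h).
Proof.
move=> sh y.
pose g t := proj1_sig (cid (sh t)).
have hg t : h (g t) = t by rewrite /g; case: cid.
exists (\sum_(k <- msupp y) fmU (g k) y@_k).
rewrite linear_sum /= [RHS]monalgE; apply: eq_bigr => k _.
by rewrite fmextU hg.
Qed.

End Push.

Lemma fm_proj (R : pzRingType) (Q : lmodType R) (K : choiceType) :
  projective Q -> projective (FM Q K).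
Proof.
move=> hQ A B g h sg.
have hl k : linear (fun q => h (fmU k q)).
  by move=> a x y; rewrite /= (fmU_lin k) linearP.
pose L k := proj1_sig (cid (hQ A B g (mkLin (hl k)) sg)).
have hL k q : g (L k q) = h (fmU k q).
  by rewrite /L; case: cid => /= kk ->.
exists (fmextL L) => x /=.
rewrite /fmext linear_sum [RHS](fm_decomp h); apply: eq_bigr => k _.
by rewrite hL.
Qed.

Section PB.
Variables (R : pzRingType) (P Y Q : lmodType R) (f : {linear P -> Q}) (s : {linear Y -> Q}).
Definition pbP : pred (P * Y)%type := fun z => f z.1 == s z.2.
Lemma pb_closed : GRing.subsemimod_closed pbP.
Proof.
split; first split.
- by rewrite !unfold_in /pbP /= !linear0.
- by move=> [p y] [p' y']; rewrite !unfold_in /pbP /= !linearD => /eqP-> /eqP->.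
- by move=> a [p y]; rewrite !unfold_in /pbP /= !linearZ => /eqP->.
Qed.
HB.instance Definition _ := GRing.isSubmodClosed.Build R (P*Y)%type pbP pb_closed.
Definition PB := {z : (P * Y)%type | pbP z}.
HB.instance Definition _ := [isSub for (@proj1_sig _ _ : PB -> _)].
HB.instance Definition _ := [Choice of PB by <:].
HB.instance Definition _ := [SubChoice_isSubLmodule of PB by <:].
Lemma PB_val_add (x y : PB) : val (x + y) = val x + val y. Proof. by []. Qed.
Lemma PB_val_scale a (x : PB) : val (a *: x) = a *: val x. Proof. by []. Qed.


Lemma PB_proj : projective P -> projective Y -> projective Q -> surj s -> projective PB.
Proof.
move=> hP hY hQ ss A B g h sg.
have [sc hsc] := hQ Y Q s (mkLin (@idlin _ Q)) ss.
have hsc' q : s (sc q) = q by rewrite hsc.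
have uP p : pbP (p, sc (f p)) by rewrite /pbP /= hsc'.
pose u p : PB := @exist _ (fun z => pbP z) _ (uP p).
have ul : linear u.
  by move=> a p p'; apply: val_inj; rewrite /= !linearP.
have rP y : pbP (0, y - sc (s y)) by rewrite /pbP /= linear0 linearB /= hsc' subrr.
pose rho y : PB := @exist _ (fun z => pbP z) _ (rP y).
have rl : linear rho.
  move=> a y y'; apply: val_inj; rewrite /= !linearP /=.
  apply: injective_projections => /=; first by rewrite scaler0 addr0.
  by rewrite scalerBr scalerN addrACA.
have hu : linear (fun p => h (u p)) by move=> a x y; rewrite ul linearP.
have hr : linear (fun y => h (rho y)) by move=> a x y; rewrite rl linearP.
have [k1 hk1] := hP A B g (mkLin hu) sg.
have [k2 hk2] := hY A B g (mkLin hr) sg.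
have hk : linear (fun w : PB => k1 (val w).1 + k2 ((val w).2 - sc (f (val w).1))).
  move=> a w w' /=.
  set x1 := (sval w).1; set x2 := (sval w).2; set y1 := (sval w').1; set y2 := (sval w').2.
  rewrite (linearP k1) (linearP f) (linearP sc).
  have -> : a *: x2 + y2 - (a *: sc (f x1) + sc (f y1)) =
            a *: (x2 - sc (f x1)) + (y2 - sc (f y1)).
    by rewrite scalerBr opprD addrACA.
  rewrite (linearP k2) scalerDr.
  by rewrite -!addrA; congr (_ + _); rewrite addrCA.
exists (mkLin hk) => w /=.
rewrite linearD /= hk1 hk2 /= -linearD; congr (h _).
apply: val_inj => /=.
case: w => [[p y]] /= /eqP hw /=.
rewrite linearB /= hsc' hw subrr linear0 subr0.
by apply: injective_projections => /=; rewrite ?addr0 // addrC subrK.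
Qed.
End PB.


Section Idx.
Variables (d : Order.disp_t) (I : orderType d).
Local Open Scope order_scope.

Definition ffb (a : I) (s : I -> nat) : Prop :=
  forall n, exists l : seq I, forall c, c < a -> s c = n -> c \in l.
Definition Sgood (a : I) (s : I -> nat) : Prop :=
  (forall c, ~~ (c < a) -> s c = 0%N) /\ ffb a s.
Definition Sx (a : I) := {s : I -> nat | Sgood a s}.
HB.instance Definition _ a := gen_eqMixin (Sx a).
HB.instance Definition _ a := gen_choiceMixin (Sx a).

Lemma Sx_eq a (x y : Sx a) : sval x = sval y -> x = y.
Proof.
case: x y => [x hx] [y hy] /= exy; subst y; congr exist; exact: Prop_irrelevance.
Qed.

Hypothesis hI : omega1_like I.

Lemma wo_least (S : I -> Prop) : (exists x, S x) -> exists2 x, S x & forall y, S y -> x <= y.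
Proof. by case: hI => H _ _; apply: H. Qed.
Lemma nctbl : ~ countable_pred (fun _ : I => True).
Proof. by case: hI. Qed.
Lemma ctbl a : countable_pred (fun x : I => x < a).
Proof. by case: hI => _ _; apply. Qed.

Definition enc (a : I) : I -> nat := proj1_sig (cid (ctbl a)).
Lemma enc_inj a x y : x < a -> y < a -> enc a x = enc a y -> x = y.
Proof. by rewrite /enc; case: cid => e he /=; apply: he. Qed.

Definition resf (a b : I) (s : I -> nat) : I -> nat :=
  fun c => if c < a then (if c < b then s c else enc a c) else 0%N.

Lemma res_good a b (s : Sx b) : Sgood a (resf a b (sval s)).
Proof.
case: s => s [s0 sf]; split.
  by move=> c /negbTE hc; rewrite /resf hc.
move=> n; case: (sf n) => l hl.
case: (pselect (exists c, c < a /\ ~~ (c < b) /\ enc a c = n)) =>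
    [[c0 [c0a [c0b e0]]]|Hn].
  exists (c0 :: l) => c ca; rewrite /resf ca.
  case cb: (c < b); first by move=> /(hl c cb) cl; rewrite inE cl orbT.
  move=> ec; rewrite inE; apply/orP; left; apply/eqP.
  by apply: enc_inj ca c0a _; rewrite ec e0.
exists l => c ca; rewrite /resf ca; case cb: (c < b); first exact: hl.
move=> ec; exfalso; apply: Hn; exists c; by rewrite cb.
Qed.

Definition res (a b : I) (s : Sx b) : Sx a := exist _ _ (res_good a s).
Arguments res : clear implicits.
Arguments res a b s.

Lemma res_id a (s : Sx a) : res a a s = s.
Proof.
apply: Sx_eq; apply: funext => c /=; rewrite /resf.
case: s => s [s0 _] /=; case ca: (c < a) => //=; by rewrite s0 // ca.
Qed.

Lemma res_comp a b c (s : Sx c) : a <= b -> b <= c -> res a b (res b c s) = res a c s.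
Proof.
move=> ab bc; apply: Sx_eq; apply: funext => x /=; rewrite /resf.
case xa: (x < a) => //.
have xb : x < b by apply: lt_le_trans ab.
have xc : x < c by apply: lt_le_trans bc.
by rewrite xb xc.
Qed.

Lemma exists_above (c : I) : exists b : I, c < b.
Proof.
apply: contrapT => H.
apply: nctbl; exists (fun x => if x == c then 0%N else (enc c x).+1) => x y _ _.
have lec z : z <= c.
  rewrite leNgt; apply/negP => cz; apply: H; by exists z.
case: eqP => [->|xc]; case: eqP => [->|yc] // [].
apply: enc_inj; rewrite lt_neqAle lec andbT; exact/eqP.
Qed.

Lemma sdef_good b : Sgood b (fun c => if c < b then enc b c else 0%N).
Proof.
split; first by move=> c /negbTE ->.
move=> n; case: (pselect (exists c, c < b /\ enc b c = n)) => [[c0 [c0b e0]]|Hn].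
  exists [:: c0] => c cb; rewrite cb => ec; rewrite inE; apply/eqP.
  by apply: enc_inj cb c0b _; rewrite ec e0.
exists [::] => c cb; rewrite cb => ec; exfalso; apply: Hn; by exists c.
Qed.

Definition sdef b : Sx b := exist _ _ (sdef_good b).

Lemma res_surj a b : a <= b -> surj (res a b).
Proof.
move=> ab [t [t0 tf]].
pose s c := if c < a then t c else if c < b then enc b c else 0%N.
have sg : Sgood b s.
  split.
    move=> c /negbTE cb; rewrite /s cb.
    by case ca: (c < a) => //; move: cb; rewrite (lt_le_trans ca ab).
  move=> n; case: (tf n) => l hl.
  case: (pselect (exists c, ~~ (c < a) /\ c < b /\ enc b c = n)) =>
      [[c0 [c0a [c0b e0]]]|Hn].
    exists (c0 :: l) => c cb; rewrite /s; case ca: (c < a).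
      by move=> /(hl c ca) cl; rewrite inE cl orbT.
    rewrite cb => ec; rewrite inE; apply/orP; left; apply/eqP.
    by apply: enc_inj cb c0b _; rewrite ec e0.
  exists l => c cb; rewrite /s; case ca: (c < a); first exact: hl.
  rewrite cb => ec; exfalso; apply: Hn; exists c; by rewrite ca.
exists (exist _ _ sg); apply: Sx_eq; apply: funext => c /=; rewrite /resf /s.
case ca: (c < a); first by rewrite (lt_le_trans ca ab).
by rewrite t0 // ca.
Qed.

End Idx.
Arguments res {d I} hI a b s.

Section Lim.
Variables (d : Order.disp_t) (I : orderType d) (hI : omega1_like I).
Variables (R : pzRingType) (Q : lmodType R).
Local Open Scope order_scope.

Definition maxI (x y : I) := if x <= y then y else x.
Lemma maxI_l x y : x <= maxI x y.
Proof. rewrite /maxI; case: ifP => [h|_]; [exact: h | exact: lexx]. Qed.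
Lemma maxI_r x y : y <= maxI x y.
Proof. rewrite /maxI; case: ifP => [_|/negbT h]; first exact: lexx.
by apply: ltW; rewrite ltNge. Qed.
Lemma foldr_maxP (P : I -> Prop) x0 l :
  P x0 -> (forall x, x \in l -> P x) -> P (foldr maxI x0 l).
Proof.
elim: l => //= x l IH p0 pl; rewrite /maxI; case: leP => _.
  by apply: IH => // z zl; apply: pl; rewrite inE zl orbT.
by apply: pl; rewrite inE eqxx.
Qed.
Lemma foldr_maxge x0 l x : x \in x0 :: l -> x <= foldr maxI x0 l.
Proof.
elim: l x => /= [|y l IH] x; first (rewrite inE => /eqP ->; exact: lexx).
rewrite !inE => /orP [/eqP ->|/orP [/eqP ->|xl]].
- apply: (le_trans _ (maxI_r _ _)); apply: IH; by rewrite inE eqxx.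
- exact: maxI_l.
- apply: (le_trans _ (maxI_r _ _)); apply: IH; by rewrite inE xl orbT.
Qed.

Lemma wf_lt : well_founded (fun x y : I => x < y).
Proof.
move=> x; apply: contrapT => nacc.
have [m nm mmin] := wo_least hI (ex_intro (fun z => ~ Acc (fun x y : I => x < y) z) x nacc).
apply: nm; constructor => z zm; apply: contrapT => nz.
by have := mmin z nz; rewrite leNgt zm.
Qed.

Lemma res_val a b (s : Sx b) c : c < a -> c < b -> sval (res hI a b s) c = sval s c.
Proof. by rewrite /= /resf => -> ->. Qed.

Variable y : forall a : I, FM Q (Sx a).
Hypothesis compat : forall a b, a <= b -> push Q (res hI a b) (y b) = y a.

Section Contra.
Variable a0 : I.
Hypothesis ya0 : y a0 != 0.

Lemma ynz b : a0 <= b -> y b != 0.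
Proof.
move=> ab; apply: contra ya0 => /eqP yb; by rewrite -(compat ab) yb linear0.
Qed.

Lemma star a b t : a <= b -> t \in msupp (y a) ->
  exists2 u, u \in msupp (y b) & res hI a b u = t.
Proof.
move=> ab; rewrite -mcoeff_neq0 -(compat ab) push_coef => hne.
apply: contrapT => hno; move: hne; rewrite big1_seq ?eqxx // => u /andP [/eqP hu us].
exfalso; apply: hno; by exists u.
Qed.

Definition Good b (rec : forall a, a < b -> Sx a) (u : Sx b) : Prop :=
  a0 <= b -> u \in msupp (y b) /\ forall a (h : a < b), a0 <= a -> res hI a b u = rec a h.

Definition Fstep b (rec : forall a, a < b -> Sx a) : Sx b :=
  match pselect (exists u, Good rec u) with
  | left e => proj1_sig (cid e)
  | right _ => sdef hI b
  end.

Definition th := Fix wf_lt (fun b => Sx b) Fstep.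

Lemma th_eq b : th b = Fstep (fun a _ => th a).
Proof.
rewrite /th Fix_eq // => x f g fg.
have -> : f = g; last by [].
apply: functional_extensionality_dep => z; apply: functional_extensionality_dep => p.
exact: fg.
Qed.

Lemma th_inv b : a0 <= b -> th b \in msupp (y b) /\
  forall a, a < b -> a0 <= a -> res hI a b (th b) = th a.
Proof.
elim/(well_founded_ind wf_lt): b => b IH ab0.
suff [u gu] : exists u, @Good b (fun a (_ : a < b) => th a) u.
  rewrite th_eq /Fstep; case: pselect => [e|[]]; last by exists u.
  case: cid => v gv /=; have [h1 h2] := gv ab0; split=> // a ab aa0; exact: h2.
apply: contrapT => nex.
have H u : u \in msupp (y b) -> exists a, [/\ a < b, a0 <= a & res hI a b u != th a].
  move=> us; apply: contrapT => nH; apply: nex; exists u => _; split => // a h aa0.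
  apply: contrapT => ne; apply: nH; exists a; split => //; exact/eqP.
pose af u := match pselect (exists a, [/\ a < b, a0 <= a & res hI a b u != th a]) with
  | left e => proj1_sig (cid e) | right _ => a0 end.
have afP u : u \in msupp (y b) -> [/\ af u < b, a0 <= af u & res hI (af u) b u != th (af u)].
  move=> us; rewrite /af; case: pselect => [e|[]]; last exact: H.
  by case: cid.
have [u0 u0s] : exists u, u \in msupp (y b).
  apply: contrapT => nu; move/eqP: (ynz ab0); apply; apply/malgP => k.
  by rewrite mcoeff0 mcoeff_outdom //; apply/negP => ks; apply: nu; exists k.
pose am := foldr maxI (af u0) [seq af u | u <- msupp (y b)].
have [amb a0am] : am < b /\ a0 <= am.
  apply: (foldr_maxP (P := fun z => z < b /\ a0 <= z)).
    by case: (afP u0 u0s).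
  move=> z /mapP [u us ->]; by case: (afP u us).
have afam u : u \in msupp (y b) -> af u <= am.
  by move=> us; apply: foldr_maxge; rewrite inE map_f ?orbT.
have [tham _] := IH am amb a0am.
have [u us hu] := star (ltW amb) tham.
have [aub a0au hne] := afP u us.
move: (afam u us); rewrite le_eqVlt => /orP [/eqP eau|ltau].
  by move: hne; rewrite eau hu eqxx.
have [_ cam] := IH am amb a0am.
by move: hne; rewrite -(res_comp hI u (ltW ltau) (ltW amb)) hu cam // eqxx.
Qed.

Lemma th_coh a b : a0 <= a -> a <= b -> res hI a b (th b) = th a.
Proof.
move=> a0a; rewrite le_eqVlt => /orP [/eqP <-|ab]; first exact: res_id.
by have [_ ->] := th_inv (le_trans a0a (ltW ab)).
Qed.

End Contra.

Lemma limzero a : y a = 0.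
Proof.
apply/eqP; apply: contrapT => /negP ya0.
pose Bc c := proj1_sig (cid (exists_above hI (maxI c a))).
have hB c : c < Bc c /\ a <= Bc c.
  rewrite /Bc; case: cid => b /= hb; split.
    exact: le_lt_trans (maxI_l _ _) hb.
  exact: ltW (le_lt_trans (maxI_r _ _) hb).
pose T b := th a b.
have coh b1 b2 : a <= b1 -> b1 <= b2 -> res hI b1 b2 (T b2) = T b1.
  by move=> h1 h2; apply: (th_coh ya0 h1 h2).
pose g c := sval (T (Bc c)) c.
have gE c b : c < b -> a <= b -> g c = sval (T b) c.
  move=> cb ab; rewrite /g; have [cB aB] := hB c.
  case/orP: (le_total (Bc c) b) => [Bb|bB].
    by rewrite -(coh _ _ aB Bb) res_val.
  by rewrite -(coh _ _ ab bB) res_val.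
have ffT c : exists l : seq I, forall x, x < Bc c -> sval (T (Bc c)) x = g c -> x \in l.
  by case: (proj2_sig (T (Bc c))) => _; apply.
pose Lst c := proj1_sig (cid (ffT c)).
have Lcov c x : x < c -> g x = g c -> x \in Lst c.
  move=> xc gx; rewrite /Lst; case: cid => l hl /=; apply: hl.
    by apply: lt_trans xc (proj1 (hB c)).
  rewrite -gx; apply/esym/gE; first by apply: lt_trans xc (proj1 (hB c)).
  exact: (proj2 (hB c)).
pose F c := undup (filter (fun x => (x < c) && (g x == g c)) (Lst c)).
have memF c x : (x \in F c) = (x < c) && (g x == g c).
  rewrite /F mem_undup mem_filter; apply/andb_idr => /andP [xc /eqP gx].
  exact: Lcov.
have ltcnt x z : x < z -> g x = g z -> (size (F x) < size (F z))%N.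
  move=> xz gxz.
  have -> : (size (F x)).+1 = size (x :: F x) by [].
  apply: uniq_leq_size.
    by rewrite /= memF ltxx /= undup_uniq.
  move=> w; rewrite inE => /orP [/eqP ->|]; first by rewrite memF xz gxz eqxx.
  by rewrite !memF => /andP [wx /eqP gw]; rewrite (lt_trans wx xz) /= gw gxz eqxx.
apply: (nctbl hI); exists (fun c => choice.pickle ((g c, size (F c)) : nat * nat)) => x z _ _ /(pcan_inj choice.pickleK) [gxz sxz].
apply: contrapT => /eqP nxz; case/orP: (lt_total nxz) => [xz|zx].
  by move: (ltcnt _ _ xz gxz); rewrite sxz ltnn.
by move: (ltcnt _ _ zx (esym gxz)); rewrite sxz ltnn.
Qed.
End Lim.


Lemma push_ext (R : pzRingType) (Q : lmodType R) (K1 K2 : choiceType) (h1 h2 : K1 -> K2) x :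
  (forall k, h1 k = h2 k) -> push Q h1 x = push Q h2 x.
Proof. by move=> e; have -> : h1 = h2 by apply: funext. Qed.

Section Main.
Variables (R : pzRingType) (M P Q : lmodType R).
Variables (f : {linear P -> Q}) (i : {linear M -> P}).
Variables (d : Order.disp_t) (I : orderType d) (hI : omega1_like I).

Definition Xm (a : I) : lmodType R := PB f (aug Q (Sx a)).

Lemma piP a b (w : Xm b) :
  pbP f (aug Q (Sx a)) ((val w).1, push Q (res hI a b) (val w).2).
Proof. by rewrite /pbP; apply/eqP; rewrite [RHS](aug_push (res hI a b) (val w).2); apply/eqP; exact: (valP w). Qed.

Definition pif a b (w : Xm b) : Xm a := @exist _ (fun z => pbP f (aug Q (Sx a)) z) _ (piP a w).

Lemma pif_lin a b : linear (@pif a b).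
Proof. move=> r w w'; apply: val_inj; rewrite /= fmext_lin. by apply: injective_projections. Qed.

Definition piL a b : {linear Xm b -> Xm a} := mkLin (@pif_lin a b).

Lemma val_pi a b (w : Xm b) :
  val (piL a b w) = ((val w).1, push Q (res hI a b) (val w).2).
Proof. by []. Qed.

Lemma val_pi1 a b (w : Xm b) : (val (piL a b w)).1 = (val w).1.
Proof. by []. Qed.
Lemma val_pi2 a b (w : Xm b) : (val (piL a b w)).2 = push Q (res hI a b) (val w).2.
Proof. by []. Qed.

Hypothesis fi0 : forall m, f (i m) = 0.

Lemma phiP (a : I) m : pbP f (aug Q (Sx a)) (i m, 0).
Proof. by change (f (i m) == aug Q (Sx a) 0); rewrite fi0 linear0. Qed.

Definition phif a (m : M) : Xm a := @exist _ (fun z => pbP f (aug Q (Sx a)) z) _ (phiP a m).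

Lemma phif_lin (a : I) : linear (phif a).
Proof.
move=> r m m'; apply: val_inj; rewrite /= !linearP.
by apply: injective_projections => //=; rewrite scaler0 addr0.
Qed.

Definition phiL (a : I) : {linear M -> Xm a} := mkLin (phif_lin a).

Lemma val_phi (a : I) m : val (phiL a m) = (i m, 0).
Proof. by []. Qed.

End Main.

Theorem mainTheorem14 (R : pzRingType) (M P Q : lmodType R)
  (f : {linear P -> Q}) (i : {linear M -> P}) :
  projective P -> projective Q -> is_kernel f i ->
  forall (d : Order.disp_t) (I : orderType d), omega1_like I ->
  exists (X : I -> lmodType R) (pi : forall a b : I, {linear X b -> X a})
         (phi : forall a, {linear M -> X a}),
    [/\ inverse_system pi,
        (forall a, projective (X a)),
        (forall a b, (a <= b)%O -> surj (pi a b))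
      & is_inverse_limit pi phi].
Proof.
move=> hP hQ [iinj hker] d I hI.
have fi0 m : f (i m) = 0 by apply/hker; exists m.
exists (Xm f (I:=I)), (piL f hI), (phiL (I:=I) fi0).
have [a0 _] : exists a0 : I, True.
  apply: contrapT => ne; apply: (nctbl hI); exists (fun _ => 0%N) => x y _ _ _.
  by exfalso; apply: ne; exists x.
split.
- split.
    move=> a x; apply: val_inj; rewrite val_pi push_id; first by case: (val x).
    by move=> k; rewrite res_id.
  move=> a b c ab bc x; apply: val_inj; apply: injective_projections.
    by rewrite !val_pi1.
  rewrite !val_pi2 push_comp; apply: push_ext => k /=; by rewrite res_comp.
- move=> a; apply: PB_proj => //; first exact: fm_proj.
  by move=> q; exists (fmU (sdef hI a) q); rewrite augU.
- move=> a b ab w.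
  have [x hx] := push_surj (res_surj hI ab) (val w).2.
  have wP : pbP f (aug Q (Sx b)) ((val w).1, x).
    by change (f (val w).1 == aug Q (Sx b) x); rewrite -(aug_push (res hI a b)) hx; exact: (valP w).
  exists (@exist _ (fun z => pbP f (aug Q (Sx b)) z) _ wP); apply: val_inj.
  apply: injective_projections; first by rewrite val_pi1.
  by rewrite val_pi2 /= -hx.
- split.
  + move=> a b ab m; apply: val_inj; apply: injective_projections.
      by rewrite val_pi1 !val_phi.
    by rewrite val_pi2 !val_phi; apply: linear0.
  + move=> m m' /(_ a0) /(congr1 val); by rewrite !val_phi => -[/iinj].
  + move=> x hx.
    have y0 a : (val (x a)).2 = 0.
      apply: (limzero (y := fun a => (val (x a)).2)) => a' b ab.
      by rewrite -(hx a' b ab) val_pi.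
    have p_eq a b : (a <= b)%O -> (val (x a)).1 = (val (x b)).1.
      by move=> ab; rewrite -(hx a b ab) val_pi.
    have pc a : (val (x a)).1 = (val (x a0)).1.
      by case/orP: (le_total a a0) => h; rewrite (p_eq _ _ h).
    have : f (val (x a0)).1 = 0.
      by move: (valP (x a0)); rewrite /pbP => /eqP ->; rewrite y0 linear0.
    move/hker => [m hm]; exists m => a; apply: val_inj; rewrite val_phi.
    by rewrite hm -(pc a) -(y0 a); case: (val (x a)).
Qed.
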